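(* Let $(I,\le)$ be a directed partially ordered set and let $(R_i,\varphi_{ij})_{i\le j}$ be a directed system of rings and ring homomorphisms indexed by $I$ (so $\varphi_{ii}=\mathrm{id}$ and $\varphi_{jk}\circ\varphi_{ij}=\varphi_{ik}$ for $i\le j\le k$). If each $R_i$ satisfies the irreducible intersection property, then $\operatorname{colim}_{i\in I}R_i$ satisfies the irreducible intersection property.
   Context: All rings are commutative with $1$. A ring $R$ satisfies the irreducible intersection property if for any prime ideals $p_1,p_2\subset R$, either $p_1+p_2=R$ or $p_1+p_2$ is a prime ideal. A partially ordered set $I$ is directed if for all $i,j\in I$ there is $k\in I$ with $i,j\le k$. *)

(* Defs.v *)
(* Rings: comPzRingType (commutative with 1, zero ring allowed). *)
From HB Require Import structures.
From mathcomp Require Import all_boot all_order all_algebra.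
Set Implicit Arguments. Unset Strict Implicit. Unset Printing Implicit Defensive.
Import GRing.Theory.
Local Open Scope ring_scope.

Definition is_ideal (R : comPzRingType) (P : R -> Prop) : Prop :=
  P 0 /\ (forall a b, P a -> P b -> P (a + b)) /\ (forall r a, P a -> P (r * a)).

Definition is_prime_ideal (R : comPzRingType) (P : R -> Prop) : Prop :=
  is_ideal P /\ ~ P 1 /\ (forall a b, P (a * b) -> P a \/ P b).

Definition ideal_sum (R : comPzRingType) (P Q : R -> Prop) : R -> Prop :=
  fun x => exists a b, P a /\ Q b /\ x = a + b.

Definition irreducible_intersection_property (R : comPzRingType) : Prop :=
  forall p1 p2 : R -> Prop, is_prime_ideal p1 -> is_prime_ideal p2 ->
    (forall x, ideal_sum p1 p2 x) \/ is_prime_ideal (ideal_sum p1 p2).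

Definition directed_poset (I : Type) (le : I -> I -> Prop) : Prop :=
  (forall i, le i i) /\
  (forall i j k, le i j -> le j k -> le i k) /\
  (forall i j, le i j -> le j i -> i = j) /\
  (forall i j, exists k, le i k /\ le j k).

Definition directed_system (I : Type) (le : I -> I -> Prop)
    (R : I -> comPzRingType)
    (phi : forall i j, le i j -> {rmorphism R i -> R j}) : Prop :=
  (forall i (h : le i i) (x : R i), phi i i h x = x) /\
  (forall i j k (hij : le i j) (hjk : le j k) (hik : le i k) (x : R i),
      phi j k hjk (phi i j hij x) = phi i k hik x).

Definition compatible_cocone (I : Type) (le : I -> I -> Prop)
    (R : I -> comPzRingType)
    (phi : forall i j, le i j -> {rmorphism R i -> R j})
    (S : comPzRingType) (g : forall i, {rmorphism R i -> S}) : Prop :=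
  forall i j (hij : le i j) (x : R i), g j (phi i j hij x) = g i x.

Definition is_colimit (I : Type) (le : I -> I -> Prop)
    (R : I -> comPzRingType)
    (phi : forall i j, le i j -> {rmorphism R i -> R j})
    (L : comPzRingType) (f : forall i, {rmorphism R i -> L}) : Prop :=
  compatible_cocone phi f /\
  forall (S : comPzRingType) (g : forall i, {rmorphism R i -> S}),
    compatible_cocone phi g ->
    exists h : {rmorphism L -> S},
      (forall i (x : R i), h (f i x) = g i x) /\
      (forall h' : {rmorphism L -> S},
         (forall i (x : R i), h' (f i x) = g i x) -> forall y, h' y = h y).

(* Main.v *)
Require Import Defs.
From HB Require Import structures.
From mathcomp Require Import all_boot all_order all_algebra.
From Stdlib Require Import Classical ClassicalEpsilon.
Set Implicit Arguments. Unset Strict Implicit. Unset Printing Implicit Defensive.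
Import GRing.Theory.
Local Open Scope ring_scope.

Lemma prime_ext (R : comPzRingType) (P Q : R -> Prop) :
  (forall x, P x <-> Q x) -> is_prime_ideal Q -> is_prime_ideal P.
Proof.
move=> e [[h0 [hD hM]] [h1 hp]]; split; [split; [|split]|split].
- by apply/e.
- by move=> a b /e ha /e hb; apply/e; auto.
- by move=> r a /e ha; apply/e; auto.
- by move/e.
- by move=> a b /e /hp [] ?; [left|right]; apply/e.
Qed.

Lemma sum_ideal (R : comPzRingType) (P Q : R -> Prop) :
  is_ideal P -> is_ideal Q -> is_ideal (ideal_sum P Q).
Proof.
move=> [p0 [pD pM]] [q0 [qD qM]]; split; [|split].
- by exists 0, 0; rewrite addr0.
- move=> x y [a [b [pa [qb ->]]]] [c [d [pc [qd ->]]]].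
  exists (a + c), (b + d); split; [exact: pD|split; [exact: qD|]].
  by rewrite addrACA.
- move=> r x [a [b [pa [qb ->]]]]; exists (r * a), (r * b).
  by split; [exact: pM|split; [exact: qM|rewrite mulrDr]].
Qed.

Lemma pullback_prime (A B : comPzRingType) (g : {rmorphism A -> B}) (p : B -> Prop) :
  is_prime_ideal p -> is_prime_ideal (fun x => p (g x)).
Proof.
move=> [[h0 [hD hM]] [h1 hp]]; split; [split; [|split]|split] => /=.
- by rewrite rmorph0.
- by move=> a b ha hb; rewrite rmorphD; auto.
- by move=> r a ha; rewrite rmorphM; auto.
- by rewrite rmorph1.
- by move=> a b; rewrite rmorphM => /hp.
Qed.

Lemma core (A B : comPzRingType) (g : {rmorphism A -> B}) (p1 p2 : B -> Prop) :
  irreducible_intersection_property A -> is_prime_ideal p1 -> is_prime_ideal p2 ->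
  ~ ideal_sum p1 p2 1 -> forall a b u v : A, p1 (g u) -> p2 (g v) ->
  g a * g b = g u + g v -> ideal_sum p1 p2 (g a) \/ ideal_sum p1 p2 (g b).
Proof.
move=> hA H1 H2 hn a b u v pu pv e.
have Q1 := pullback_prime g H1; have Q2 := pullback_prime g H2.
have pu' : p1 (g (a * b - v)) by rewrite rmorphB rmorphM e addrK.
have hab : ideal_sum (fun x => p1 (g x)) (fun x => p2 (g x)) (a * b).
  by exists (a * b - v), v; rewrite subrK.
have back x : ideal_sum (fun x => p1 (g x)) (fun x => p2 (g x)) x -> ideal_sum p1 p2 (g x).
  by move=> [c [d [pc [pd ->]]]]; exists (g c), (g d); rewrite rmorphD.
case: (hA _ _ Q1 Q2) => [hall|[_ [_ hp]]].
- by case: hn; rewrite -(rmorph1 g); apply: back.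
- by case: (hp _ _ hab) => h; [left|right]; apply: back.
Qed.

Lemma int_prime_gen (P : int -> Prop) : is_prime_ideal P ->
  forall m : nat, (0 < m)%N -> P m%:Z -> exists q, prime q /\ P q%:Z.
Proof.
move=> [[h0 [hD hM]] [h1 hp]].
elim/ltn_ind => m IH m0 Pm.
have [m1|m1] := leqP m 1.
  have m_1 : m = 1%N by apply/eqP; rewrite eqn_leq m1 m0.
  by rewrite m_1 in Pm.
have pq := pdiv_prime m1.
have dq := pdiv_dvd m.
move: Pm; rewrite -(divnK dq) PoszM => /hp [Pd|Pq]; last by exists (pdiv m).
have q1 : (1 < pdiv m)%N by apply: prime_gt1.
have l1 : (m %/ pdiv m < m)%N by apply: ltn_Pdiv.
have l2 : (0 < m %/ pdiv m)%N by rewrite divn_gt0 ?prime_gt0 // dvdn_leq.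
exact: (IH _ l1 l2 Pd).
Qed.

Lemma int_prime_nz (P : int -> Prop) : is_prime_ideal P ->
  forall n, n != 0 -> P n -> exists q, prime q /\ forall x, P x <-> (q%:Z %| x)%Z.
Proof.
move=> HP n nz Pn; have HP' := HP.
case: HP' => [[h0 [hD hM]] [h1 hp]].
have Pa : P (`|n|%N)%:Z by rewrite abszEsign; apply: hM.
have n0 : (0 < `|n|)%N by rewrite absz_gt0.
have [q [pq Pq]] := int_prime_gen HP n0 Pa.
exists q; split => // x; split => [Px|].
- case: (boolP (q%:Z %| x)%Z) => // ndx.
  have cq : coprimez q x by rewrite coprimezE prime_coprime //.
  have [u [v e]] := Bezoutz q x.
  move: cq; rewrite /coprimez => /eqP c1; rewrite c1 in e.
  by case: h1; rewrite -e; apply: hD; apply: hM.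
- by move=> /dvdzP [c ->]; apply: hM.
Qed.

Lemma int_iip : irreducible_intersection_property int.
Proof.
move=> P Q HP HQ.
have HP' := HP; have HQ' := HQ.
case: HP' => [[p0 [pD pM]] [p1 pp]]; case: HQ' => [[q0 [qD qM]] [q1 qp]].
have zero (S : int -> Prop) : ~ (exists n, n != 0 /\ S n) -> forall x, S x -> x = 0.
  move=> hn x Sx; case: (eqVneq x 0) => // nx; case: hn; by exists x.
case: (classic (exists n, n != 0 /\ P n)) => [[n [nz Pn]]|hP]; last first.
  right; apply: (prime_ext _ HQ) => x; split.
  - by move=> [a [b [pa [qb ->]]]]; rewrite (zero _ hP a pa) add0r.
  - by move=> qx; exists 0, x; rewrite add0r.
have [q [pq cq]] := int_prime_nz HP nz Pn.
case: (classic (exists n, n != 0 /\ Q n)) => [[m [mz Qm]]|hQ]; last first.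
  right; apply: (prime_ext _ HP) => x; split.
  - by move=> [a [b [pa [qb ->]]]]; rewrite (zero _ hQ b qb) addr0.
  - by move=> px; exists x, 0; rewrite addr0.
have [r [pr cr]] := int_prime_nz HQ mz Qm.
case: (eqVneq q r) => [eqr|nqr].
  right; apply: (prime_ext _ HP) => x; split.
  - move=> [a [b [pa [qb ->]]]]; apply: pD => //.
    by apply/cq; rewrite eqr; apply/cr.
  - by move=> px; exists x, 0; rewrite addr0.
left => x.
have Pq : P q%:Z by apply/cq; apply: dvdzz.
have Qr : Q r%:Z by apply/cr; apply: dvdzz.
have cop : coprimez q r by rewrite coprimezE /= prime_coprime // dvdn_prime2.
have [u [v e]] := Bezoutz q r.
move: cop; rewrite /coprimez => /eqP c1; rewrite c1 in e.
have h1 : P (x * u * q%:Z) by rewrite -mulrA; apply pM; apply pM.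
have h2 : Q (x * v * r%:Z) by rewrite -mulrA; apply qM; apply qM.
exists (x * u * q%:Z), (x * v * r%:Z); split => //; split => //.
by rewrite -!mulrA -mulrDr e mulr1.
Qed.

Definition pb (P : Prop) : bool := if excluded_middle_informative P then true else false.
Lemma pbP (P : Prop) : reflect P (pb P).
Proof. rewrite /pb; case: excluded_middle_informative => h; by constructor. Qed.

Section Surj.
Variables (I : Type) (le : I -> I -> Prop) (R : I -> comPzRingType)
  (phi : forall i j, le i j -> {rmorphism R i -> R j})
  (L : comPzRingType) (f : forall i, {rmorphism R i -> L}).
Hypothesis Hdir : directed_poset le.
Hypothesis Hcol : is_colimit phi f.
Hypothesis Hiip : forall i, irreducible_intersection_property (R i).

Definition inS (y : L) : Prop :=
  (exists n : int, y = n%:~R) \/ (exists i (x : R i), y = f i x).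

Lemma inS_two y1 y2 : inS y1 -> inS y2 ->
  (exists m n : int, y1 = m%:~R /\ y2 = n%:~R) \/
  (exists k (x1 x2 : R k), y1 = f k x1 /\ y2 = f k x2).
Proof.
case: Hcol => Hcoc _.
case: Hdir => _ [_ [_ Hub]].
move=> [[m ->]|[i [x ->]]] [[n ->]|[j [z ->]]].
- by left; exists m, n.
- by right; exists j, m%:~R, z; rewrite rmorph_int.
- by right; exists i, x, n%:~R; rewrite rmorph_int.
- right; have [k [hik hjk]] := Hub i j.
  by exists k, (@phi i k hik x), (@phi j k hjk z); rewrite !Hcoc.
Qed.

Definition Sb : pred L := fun y => pb (inS y).

Lemma Sb_closed : subring_closed Sb.
Proof.
split.
- by apply/pbP; left; exists 1.
- move=> a b /pbP ha /pbP hb; apply/pbP.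
  case: (inS_two ha hb) => [[m [n [-> ->]]]|[k [x1 [x2 [-> ->]]]]].
  + by left; exists (m - n); rewrite intrB.
  + by right; exists k, (x1 - x2); rewrite rmorphB.
- move=> a b /pbP ha /pbP hb; apply/pbP.
  case: (inS_two ha hb) => [[m [n [-> ->]]]|[k [x1 [x2 [-> ->]]]]].
  + by left; exists (m * n); rewrite intrM.
  + by right; exists k, (x1 * x2); rewrite rmorphM.
Qed.

HB.instance Definition _ := GRing.isSubringClosed.Build L Sb Sb_closed.

Definition ST := {y : L | Sb y}.
HB.instance Definition _ := [isSub of ST for (@sval L Sb)].
HB.instance Definition _ := [Choice of ST by <:].
HB.instance Definition _ := GRing.SubChoice_isSubComPzRing.Build L Sb ST Sb_closed.

Lemma inS_f i (x : R i) : Sb (f i x).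
Proof. by apply/pbP; right; exists i, x. Qed.

Definition gS i (x : R i) : ST := exist _ (f i x) (inS_f x).

Section G.
Variable i : I.
Lemma gS_zmod : zmod_morphism (@gS i).
Proof. by move=> a b; apply: val_inj; rewrite /= rmorphB. Qed.
Lemma gS_mon : monoid_morphism (@gS i).
Proof. by split; [apply: val_inj; rewrite /= rmorph1 | move=> a b; apply: val_inj; rewrite /= rmorphM]. Qed.
HB.instance Definition _ := GRing.isZmodMorphism.Build (R i) ST (@gS i) gS_zmod.
HB.instance Definition _ := GRing.isMonoidMorphism.Build (R i) ST (@gS i) gS_mon.
End G.


Lemma gS_coc : compatible_cocone phi gS.
Proof. case: Hcol => Hc _ i j hij x; apply: val_inj => /=; exact: Hc. Qed.

Lemma surjS (y : L) : inS y.
Proof.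
case: (Hcol) => Hc Hu.
have [h [hf _]] := Hu _ gS gS_coc.
have [h0 [_ hu]] := Hu _ f Hc.
pose h1 : {rmorphism L -> L} := (val \o h)%FUN.
have e1 : h1 y = h0 y by apply: hu => i x; rewrite /h1 /= hf.
have e2 : (idfun : {rmorphism L -> L}) y = h0 y by apply: hu.
have : Sb (val (h y)) := valP (h y).
by move: e1; rewrite /h1 /= => ->; rewrite -e2 => /pbP.
Qed.

Lemma lift4 (y1 y2 y3 y4 : L) : exists (A : comPzRingType) (g : {rmorphism A -> L})
  (x1 x2 x3 x4 : A), irreducible_intersection_property A /\
  y1 = g x1 /\ y2 = g x2 /\ y3 = g x3 /\ y4 = g x4.
Proof.
case: (Hcol) => Hcoc _.
case: Hdir => _ [_ [_ Hub]].
case: (classic (exists i : I, True)) => [[i0 _]|hI].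
- have img (y : L) : exists k (x : R k), y = f k x.
    case: (surjS y) => [[n ->]|//]; exists i0, n%:~R; by rewrite rmorph_int.
  have up2 (ya yb : L) : exists k (xa xb : R k), ya = f k xa /\ yb = f k xb.
    have [i [xa ->]] := img ya; have [j [xb ->]] := img yb.
    have [k [hik hjk]] := Hub i j.
    by exists k, (@phi i k hik xa), (@phi j k hjk xb); rewrite !Hcoc.
  have [k1 [a1 [a2 [e1 e2]]]] := up2 y1 y2.
  have [k2 [b3 [b4 [e3 e4]]]] := up2 y3 y4.
  have [k [h1 h2]] := Hub k1 k2.
  exists (R k), (f k), (@phi k1 k h1 a1), (@phi k1 k h1 a2), (@phi k2 k h2 b3), (@phi k2 k h2 b4).
  by split; [exact: Hiip | rewrite !Hcoc].
- have img (y : L) : exists n : int, y = n%:~R.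
    by case: (surjS y) => [//|[i _]]; case: hI; exists i.
  have [n1 e1] := img y1; have [n2 e2] := img y2.
  have [n3 e3] := img y3; have [n4 e4] := img y4.
  exists int, ( *~%R (1 : L) : {rmorphism int -> L}), n1, n2, n3, n4.
  by split; [exact: int_iip | ].
Qed.
End Surj.

Theorem mainTheorem12 (I : Type) (le : I -> I -> Prop)
    (R : I -> comPzRingType)
    (phi : forall i j, le i j -> {rmorphism R i -> R j})
    (L : comPzRingType) (f : forall i, {rmorphism R i -> L}) :
  directed_poset le ->
  directed_system phi ->
  (forall i, irreducible_intersection_property (R i)) ->
  is_colimit phi f ->
  irreducible_intersection_property L.
Proof.
move=> Hdir _ Hiip Hcol p1 p2 H1 H2.
have H1' := H1; have H2' := H2.
case: H1' => [I1 [n1 pr1]]; case: H2' => [I2 [n2 pr2]].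
case: (classic (ideal_sum p1 p2 1)) => [[a [b [pa [pb e]]]]|hn].
  left => x; exists (x * a), (x * b).
  case: I1 => _ [_ m1]; case: I2 => _ [_ m2].
  by split; [exact: m1|split; [exact: m2|rewrite -mulrDr -e mulr1]].
right; split; first exact: sum_ideal.
split => // a b [u [v [pu [pv e]]]].
have [A [g [xa [xb [xu [xv [hA [ea [eb [eu ev]]]]]]]]]] := lift4 Hdir Hcol Hiip a b u v.
subst; apply: (core hA H1 H2 hn pu pv e).
Qed.
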